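(* The $R_5$-submodules $U',U'',U''',U''''$ and $U$ of $H_5$ are stable under $\Phi$, i.e. $\Phi(X)\subseteq X$ for each of them.
   Context: Let $B_3=\langle s_1,s_2\mid s_1s_2s_1=s_2s_1s_2\rangle$, $R_5=\mathbb{Z}[a,b,c,d,e,e^{-1}]$, and let $H_5$ be the quotient of the group algebra $R_5B_3$ by the relations $s_i^5=as_i^4+bs_i^3+cs_i^2+ds_i+e$ for $i=1,2$; identify $s_i$ with their images. Let $\Phi$ be the ring (i.e. $\mathbb{Z}$-algebra) automorphism of $H_5$ determined by $s_i\mapsto s_i^{-1}$ ($i=1,2$), $a\mapsto -e^{-1}d$, $b\mapsto -e^{-1}c$, $c\mapsto -e^{-1}b$, $d\mapsto -e^{-1}a$, $e\mapsto e^{-1}$. For $i=1,2$ let $u_i$ be the $R_5$-subalgebra of $H_5$ generated by $s_i$. Set $\omega=s_2s_1^2s_2$. For $R_5$-submodules (or elements) $X_1,\dots,X_n$, $X_1\cdots X_n$ denotes the $R_5$-submodule spanned by products $x_1\cdots x_n$, $x_j\in X_j$; sums are sums of submodules. Define $U'=u_1u_2u_1+u_1\omega+u_1\omega^{-1}+u_1s_2^{-1}s_1^2s_2^{-1}u_1+u_1s_2s_1^{-2}s_2u_1+u_1s_2^2s_1^2s_2^2u_1+u_1s_2^{-2}s_1^{-2}s_2^{-2}u_1+u_1s_2s_1^{-2}s_2^2u_1+u_1s_2^{-1}s_1^2s_2^{-2}u_1+u_1s_2^{-1}s_1s_2^{-1}u_1+u_1s_2s_1^{-1}s_2u_1+u_1s_2^{-2}s_1^{-2}s_2^2u_1+u_1s_2^2s_1^2s_2^{-2}u_1+u_1s_2^2s_1^{-2}s_2^2u_1+u_1s_2^{-2}s_1^2s_2^{-2}u_1+u_1s_2^{-2}s_1s_2^{-1}u_1+u_1s_2^{-1}s_1s_2^{-2}u_1$;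 $U''=U'+u_1\omega^2+u_1\omega^{-2}+u_1s_2^{-2}s_1^2s_2^{-1}s_1s_2^{-1}u_1+u_1s_2^2s_1^{-2}s_2s_1^{-1}s_2u_1+u_1s_2s_1^{-2}s_2^2s_1^{-2}s_2^2u_1+u_1s_2^{-1}s_1^2s_2^{-2}s_1^2s_2^{-2}u_1$; $U'''=U''+u_1\omega^3+u_1\omega^{-3}$; $U''''=U'''+u_1\omega^4+u_1\omega^{-4}$; $U=U''''+u_1\omega^5+u_1\omega^{-5}$. *)

(* Defs.v *)
(* H_5 is presented as the Z-algebra (unital ring) generated by
   central commuting coefficient symbols a,b,c,d,e,e^{-1} and s1^{+-1}, s2^{+-1},
   subject to: e e^{-1} = 1, s_i s_i^{-1} = s_i^{-1} s_i = 1, braid relation,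
   and the quintic relations.  This Z-algebra is exactly R_5 B_3 / (quintic
   relations) = H_5.  Elements of H_5 are represented by terms modulo [heq];
   subsets of H_5 are predicates on terms (always saturated under [heq]). *)
From Stdlib Require Import List.
Import ListNotations.

Inductive term : Type :=
| tzero | tone
| tadd : term -> term -> term
| topp : term -> term
| tmul : term -> term -> term
| ta | tb | tc | td | te | tei
| ts1 | ts1i | ts2 | ts2i.

Fixpoint tpow (t : term) (n : nat) : term :=
  match n with O => tone | S n => tmul t (tpow t n) end.

Inductive coefgen : term -> Prop :=
| cg_a : coefgen ta | cg_b : coefgen tb | cg_c : coefgen tc
| cg_d : coefgen td | cg_e : coefgen te | cg_ei : coefgen tei.

Definition quintic_rhs (s : term) : term :=
  tadd (tmul ta (tpow s 4)) (tadd (tmul tb (tpow s 3)) (tadd (tmul tc (tpow s 2))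
    (tadd (tmul td s) te))).

Inductive heq : term -> term -> Prop :=
| heq_refl x : heq x x
| heq_sym x y : heq x y -> heq y x
| heq_trans x y z : heq x y -> heq y z -> heq x z
| heq_add x x' y y' : heq x x' -> heq y y' -> heq (tadd x y) (tadd x' y')
| heq_opp x x' : heq x x' -> heq (topp x) (topp x')
| heq_mul x x' y y' : heq x x' -> heq y y' -> heq (tmul x y) (tmul x' y')
| heq_addA x y z : heq (tadd x (tadd y z)) (tadd (tadd x y) z)
| heq_addC x y : heq (tadd x y) (tadd y x)
| heq_add0 x : heq (tadd tzero x) x
| heq_addN x : heq (tadd (topp x) x) tzero
| heq_mulA x y z : heq (tmul x (tmul y z)) (tmul (tmul x y) z)
| heq_mul1l x : heq (tmul tone x) x
| heq_mul1r x : heq (tmul x tone) x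
| heq_mulDl x y z : heq (tmul (tadd x y) z) (tadd (tmul x z) (tmul y z))
| heq_mulDr x y z : heq (tmul x (tadd y z)) (tadd (tmul x y) (tmul x z))
| heq_central x y : coefgen x -> heq (tmul x y) (tmul y x)
| heq_einv_r : heq (tmul te tei) tone
| heq_einv_l : heq (tmul tei te) tone
| heq_s1inv_r : heq (tmul ts1 ts1i) tone
| heq_s1inv_l : heq (tmul ts1i ts1) tone
| heq_s2inv_r : heq (tmul ts2 ts2i) tone
| heq_s2inv_l : heq (tmul ts2i ts2) tone
| heq_braid : heq (tmul ts1 (tmul ts2 ts1)) (tmul ts2 (tmul ts1 ts2))
| heq_quint1 : heq (tpow ts1 5) (quintic_rhs ts1)
| heq_quint2 : heq (tpow ts2 5) (quintic_rhs ts2).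

Inductive scalar : term -> Prop :=
| sc_zero : scalar tzero
| sc_one : scalar tone
| sc_gen x : coefgen x -> scalar x
| sc_add x y : scalar x -> scalar y -> scalar (tadd x y)
| sc_opp x : scalar x -> scalar (topp x)
| sc_mul x y : scalar x -> scalar y -> scalar (tmul x y).

Fixpoint Phi (t : term) : term :=
  match t with
  | tzero => tzero | tone => tone
  | tadd x y => tadd (Phi x) (Phi y)
  | topp x => topp (Phi x)
  | tmul x y => tmul (Phi x) (Phi y)
  | ta => topp (tmul tei td)
  | tb => topp (tmul tei tc)
  | tc => topp (tmul tei tb)
  | td => topp (tmul tei ta)
  | te => tei | tei => te
  | ts1 => ts1i | ts1i => ts1
  | ts2 => ts2i | ts2i => ts2
  end.

Inductive span (G : term -> Prop) : term -> Prop :=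
| span_gen g : G g -> span G g
| span_zero : span G tzero
| span_add x y : span G x -> span G y -> span G (tadd x y)
| span_scal r x : scalar r -> span G x -> span G (tmul r x)
| span_heq x y : heq x y -> span G x -> span G y.

Inductive subalg (g : term) : term -> Prop :=
| sa_scalar r : scalar r -> subalg g r
| sa_gen : subalg g g
| sa_add x y : subalg g x -> subalg g y -> subalg g (tadd x y)
| sa_mul x y : subalg g x -> subalg g y -> subalg g (tmul x y)
| sa_heq x y : heq x y -> subalg g x -> subalg g y.

Definition u1 : term -> Prop := subalg ts1.
Definition u2 : term -> Prop := subalg ts2.

Definition elt (w : term) : term -> Prop := fun t => t = w.

Fixpoint mulseq (xs : list term) : term :=
  match xs with
  | [] => tone
  | [x] => x
  | x :: xs' => tmul x (mulseq xs')
  end.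

Definition prodN (Xs : list (term -> Prop)) : term -> Prop :=
  span (fun t => exists xs, Forall2 (fun (X : term -> Prop) x => X x) Xs xs
                            /\ t = mulseq xs).

Definition sumN (Xs : list (term -> Prop)) : term -> Prop :=
  span (fun t => exists X, In X Xs /\ X t).

Definition w (xs : list term) : term := mulseq xs.

Definition omega : term := w [ts2; ts1; ts1; ts2].
Definition omega_inv : term := w [ts2i; ts1i; ts1i; ts2i].

Definition u1wu1 (xs : list term) := prodN [u1; elt (w xs); u1].

Definition s1_2 := [ts1; ts1].
Definition s1_m2 := [ts1i; ts1i].
Definition s2_2 := [ts2; ts2].
Definition s2_m2 := [ts2i; ts2i].

Definition U'_list : list (term -> Prop) :=
  [ prodN [u1; u2; u1];
    prodN [u1; elt omega];
    prodN [u1; elt omega_inv];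
    u1wu1 ([ts2i] ++ s1_2 ++ [ts2i]);
    u1wu1 ([ts2] ++ s1_m2 ++ [ts2]);
    u1wu1 (s2_2 ++ s1_2 ++ s2_2);
    u1wu1 (s2_m2 ++ s1_m2 ++ s2_m2);
    u1wu1 ([ts2] ++ s1_m2 ++ s2_2);
    u1wu1 ([ts2i] ++ s1_2 ++ s2_m2);
    u1wu1 [ts2i; ts1; ts2i];
    u1wu1 [ts2; ts1i; ts2];
    u1wu1 (s2_m2 ++ s1_m2 ++ s2_2);
    u1wu1 (s2_2 ++ s1_2 ++ s2_m2);
    u1wu1 (s2_2 ++ s1_m2 ++ s2_2);
    u1wu1 (s2_m2 ++ s1_2 ++ s2_m2);
    u1wu1 (s2_m2 ++ [ts1; ts2i]);
    u1wu1 ([ts2i; ts1] ++ s2_m2) ].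

Definition U' : term -> Prop := sumN U'_list.

Definition U'' : term -> Prop :=
  sumN [ U';
         prodN [u1; elt (tpow omega 2)];
         prodN [u1; elt (tpow omega_inv 2)];
         u1wu1 (s2_m2 ++ s1_2 ++ [ts2i; ts1; ts2i]);
         u1wu1 (s2_2 ++ s1_m2 ++ [ts2; ts1i; ts2]);
         u1wu1 ([ts2] ++ s1_m2 ++ s2_2 ++ s1_m2 ++ s2_2);
         u1wu1 ([ts2i] ++ s1_2 ++ s2_m2 ++ s1_2 ++ s2_m2) ].

Definition U''' : term -> Prop :=
  sumN [ U''; prodN [u1; elt (tpow omega 3)]; prodN [u1; elt (tpow omega_inv 3)] ].

Definition U'''' : term -> Prop :=
  sumN [ U'''; prodN [u1; elt (tpow omega 4)]; prodN [u1; elt (tpow omega_inv 4)] ].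

Definition U : term -> Prop :=
  sumN [ U''''; prodN [u1; elt (tpow omega 5)]; prodN [u1; elt (tpow omega_inv 5)] ].

Definition Phi_stable (X : term -> Prop) : Prop := forall x, X x -> X (Phi x).

(* Main.v *)
Require Import Defs.
From Stdlib Require Import List Setoid Morphisms Ring.
Import ListNotations.


#[global] Instance heq_equiv : Equivalence heq.
Proof. split; [exact heq_refl | exact heq_sym | exact heq_trans]. Qed.
#[global] Instance tadd_prop : Proper (heq ==> heq ==> heq) tadd.
Proof. intros ? ? ? ? ? ?; apply heq_add; auto. Qed.
#[global] Instance tmul_prop : Proper (heq ==> heq ==> heq) tmul.
Proof. intros ? ? ? ? ? ?; apply heq_mul; auto. Qed.
#[global] Instance topp_prop : Proper (heq ==> heq) topp.
Proof. intros ? ? ?; apply heq_opp; auto. Qed.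

Lemma add0r x : heq (tadd x tzero) x.
Proof. rewrite heq_addC; apply heq_add0. Qed.
Lemma addNr x : heq (tadd x (topp x)) tzero.
Proof. rewrite heq_addC; apply heq_addN. Qed.
Lemma neg_unique z w : heq (tadd z w) tzero -> heq z (topp w).
Proof.
  intro H. rewrite <- (add0r z). rewrite <- (addNr w). rewrite heq_addA.
  rewrite H. apply heq_add0.
Qed.
Lemma add_cancel a x y : heq (tadd a x) (tadd a y) -> heq x y.
Proof.
  intro H. rewrite <- (heq_add0 x), <- (heq_add0 y).
  rewrite <- (heq_addN a). rewrite <- !heq_addA. rewrite H. reflexivity.
Qed.
Lemma mul0l x : heq (tmul tzero x) tzero.
Proof.
  apply (add_cancel (tmul tzero x)). rewrite <- heq_mulDl, heq_add0, add0r. reflexivity.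
Qed.
Lemma mul0r x : heq (tmul x tzero) tzero.
Proof.
  apply (add_cancel (tmul x tzero)). rewrite <- heq_mulDr, heq_add0, add0r. reflexivity.
Qed.
Lemma mulNl x y : heq (tmul (topp x) y) (topp (tmul x y)).
Proof. apply neg_unique. rewrite <- heq_mulDl, heq_addN. apply mul0l. Qed.
Lemma mulNr x y : heq (tmul x (topp y)) (topp (tmul x y)).
Proof. apply neg_unique. rewrite <- heq_mulDr, heq_addN. apply mul0r. Qed.

Lemma scalar_central r y : scalar r -> heq (tmul r y) (tmul y r).
Proof.
  intro H; revert y; induction H; intro z.
  - rewrite mul0l, mul0r; reflexivity.
  - rewrite heq_mul1l, heq_mul1r; reflexivity.
  - apply heq_central; auto.
  - rewrite heq_mulDl, heq_mulDr, IHscalar1, IHscalar2; reflexivity.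
  - rewrite mulNl, mulNr, IHscalar; reflexivity.
  - rewrite <- heq_mulA, IHscalar2, heq_mulA, IHscalar1, <- heq_mulA; reflexivity.
Qed.

Inductive comm1 (s si : term) : term -> Prop :=
| cm_sc r : scalar r -> comm1 s si r
| cm_s : comm1 s si s | cm_si : comm1 s si si
| cm_add x y : comm1 s si x -> comm1 s si y -> comm1 s si (tadd x y)
| cm_opp x : comm1 s si x -> comm1 s si (topp x)
| cm_mul x y : comm1 s si x -> comm1 s si y -> comm1 s si (tmul x y).

Lemma comm_ext s si a : (forall r, scalar r -> heq (tmul a r) (tmul r a)) ->
  heq (tmul a s) (tmul s a) -> heq (tmul a si) (tmul si a) ->
  forall y, comm1 s si y -> heq (tmul a y) (tmul y a).
Proof.
  intros Hr Hs Hsi y Hy; induction Hy; auto.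
  - rewrite heq_mulDl, heq_mulDr, IHHy1, IHHy2; reflexivity.
  - rewrite mulNl, mulNr, IHHy; reflexivity.
  - rewrite heq_mulA, IHHy1, <- heq_mulA, IHHy2, heq_mulA; reflexivity.
Qed.

Lemma comm1_comm s si : heq (tmul s si) (tmul si s) ->
  forall x y, comm1 s si x -> comm1 s si y -> heq (tmul x y) (tmul y x).
Proof.
  intros h x y Hx; revert y; induction Hx; intros z Hz.
  - apply scalar_central; auto.
  - apply comm_ext with s si; auto. intros; symmetry; apply scalar_central; auto. reflexivity.
  - apply comm_ext with s si; auto. intros; symmetry; apply scalar_central; auto. symmetry; auto. reflexivity.
  - rewrite heq_mulDl, heq_mulDr, IHHx1, IHHx2 by auto; reflexivity.
  - rewrite mulNl, mulNr, IHHx by auto; reflexivity.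
  - rewrite <- heq_mulA, IHHx2 by auto. rewrite heq_mulA, IHHx1 by auto. rewrite <- heq_mulA; reflexivity.
Qed.

Section CR.
Variables s si : term.
Hypothesis hcomm : heq (tmul s si) (tmul si s).
Record C := mkC { cv : term; cp : comm1 s si cv }.
Definition ceq (x y : C) := heq (cv x) (cv y).
Definition c0 := mkC tzero (cm_sc _ _ _ sc_zero).
Definition c1 := mkC tone (cm_sc _ _ _ sc_one).
Definition cadd x y := mkC (tadd (cv x) (cv y)) (cm_add _ _ _ _ (cp x) (cp y)).
Definition cmul x y := mkC (tmul (cv x) (cv y)) (cm_mul _ _ _ _ (cp x) (cp y)).
Definition copp x := mkC (topp (cv x)) (cm_opp _ _ _ (cp x)).
Definition csub x y := cadd x (copp y).
Lemma Csetoid : Setoid_Theory C ceq.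
Proof. unfold ceq; split; intro; intros; [reflexivity| symmetry; auto| etransitivity; eauto]. Qed.
Lemma Cext : ring_eq_ext cadd cmul copp ceq.
Proof.
  unfold ceq; split; [intros ? ? H ? ? H'|intros ? ? H ? ? H'|intros ? ? H]; simpl; rewrite H; try rewrite H'; reflexivity.
Qed.
Lemma Cth : ring_theory c0 c1 cadd cmul csub copp ceq.
Proof.
  unfold ceq; split; intros; simpl.
  - apply heq_add0.
  - apply heq_addC.
  - apply heq_addA.
  - apply heq_mul1l.
  - apply (comm1_comm s si); auto; apply cp.
  - apply heq_mulA.
  - apply heq_mulDl.
  - reflexivity.
  - apply addNr.
Qed.
#[global] Instance ceq_equiv : Equivalence ceq.
Proof. unfold ceq; split; intro; intros; [reflexivity| symmetry; auto| etransitivity; eauto]. Qed.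
#[global] Instance cadd_prop : Proper (ceq ==> ceq ==> ceq) cadd.
Proof. unfold ceq; intros ? ? H ? ? H'; simpl; rewrite H, H'; reflexivity. Qed.
#[global] Instance cmul_prop : Proper (ceq ==> ceq ==> ceq) cmul.
Proof. unfold ceq; intros ? ? H ? ? H'; simpl; rewrite H, H'; reflexivity. Qed.
#[global] Instance copp_prop : Proper (ceq ==> ceq) copp.
Proof. unfold ceq; intros ? ? H; simpl; rewrite H; reflexivity. Qed.
#[global] Instance csub_prop : Proper (ceq ==> ceq ==> ceq) csub.
Proof. unfold ceq; intros ? ? H ? ? H'; simpl; rewrite H, H'; reflexivity. Qed.
Fixpoint cpow (x : C) (n : nat) : C := match n with O => c1 | S n => cmul x (cpow x n) end.
Definition cs := mkC s (cm_s s si).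
Definition csi := mkC si (cm_si s si).
Definition cg (x : term) (h : coefgen x) := mkC x (cm_sc s si _ (sc_gen _ h)).
End CR.

Lemma hc1 : heq (tmul ts1 ts1i) (tmul ts1i ts1).
Proof. rewrite heq_s1inv_r, heq_s1inv_l; reflexivity. Qed.
Lemma hc2 : heq (tmul ts2 ts2i) (tmul ts2i ts2).
Proof. rewrite heq_s2inv_r, heq_s2inv_l; reflexivity. Qed.
Add Ring Cring1 : (Cth ts1 ts1i hc1) (setoid (Csetoid ts1 ts1i) (Cext ts1 ts1i)).
Add Ring Cring2 : (Cth ts2 ts2i hc2) (setoid (Csetoid ts2 ts2i) (Cext ts2 ts2i)).


Module S1.
Local Notation s := (cs ts1 ts1i).
Local Notation si := (csi ts1 ts1i).
Local Notation one := (c1 ts1 ts1i).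
Local Notation a := (cg ts1 ts1i ta cg_a).
Local Notation b := (cg ts1 ts1i tb cg_b).
Local Notation c := (cg ts1 ts1i tc cg_c).
Local Notation d := (cg ts1 ts1i td cg_d).
Local Notation e := (cg ts1 ts1i te cg_e).
Local Notation ei := (cg ts1 ts1i tei cg_ei).
Local Infix "==" := (ceq ts1 ts1i) (at level 70).
Local Infix "+" := (cadd ts1 ts1i).
Local Infix "*" := (cmul ts1 ts1i).
Local Infix "-" := (csub ts1 ts1i).
Local Notation "- x" := (copp ts1 ts1i x).
Local Notation cp := (cpow ts1 ts1i).
Definition h1 : e * ei == one := heq_einv_r.
Definition h2 : s * si == one := heq_s1inv_r.
Definition hQ : cp s 5 == a * cp s 4 + (b * cp s 3 + (c * cp s 2 + (d * s + e))) := heq_quint1.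

Lemma t_cube : cp s 3 == a * cp s 2 + (b * (s * one) + (c * one + (d * (si * one) + e * (si * (si * one))))).
Proof.
  pose proof hQ as hQ. pose proof h2 as h2. cbn [cpow] in *.
  transitivity ((s*si)*((s*si)*(s*(s*(s*one))))). rewrite h2. ring.
  transitivity (si*si*(s*(s*(s*(s*(s*one)))))). ring.
  rewrite hQ.
  transitivity (a*s*s*((s*si)*(s*si)) + b*s*((s*si)*(s*si)) + c*((s*si)*(s*si)) + d*si*(s*si) + e*si*si). ring.
  rewrite h2. ring.
Qed.

Lemma t_inv : si == ei * cp s 4 + ((-(ei*a)) * cp s 3 + ((-(ei*b)) * cp s 2 + ((-(ei*c)) * s + (-(ei*d))))).
Proof.
  pose proof hQ as hQ. pose proof h2 as h2. pose proof h1 as h1. cbn [cpow] in *.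
  transitivity (si*(e*ei)). rewrite h1. ring.
  transitivity (ei*si*((a * (s * (s * (s * (s * one)))) + (b * (s * (s * (s * one))) + (c * (s * (s * one)) + (d * s + e)))) - (a*s*s*s*s+b*s*s*s+c*s*s+d*s))). ring.
  rewrite <- hQ.
  transitivity (ei*(s*si)*(s*s*s*s - a*s*s*s - b*s*s - c*s - d)). ring.
  rewrite h2. ring.
Qed.

Lemma t_qinv : cp si 5 == (-(ei*d)) * cp si 4 + ((-(ei*c)) * cp si 3 + ((-(ei*b)) * cp si 2 + ((-(ei*a)) * si + ei))).
Proof.
  pose proof hQ as hQ. pose proof h2 as h2. pose proof h1 as h1. cbn [cpow] in *.
  transitivity ((si*(si*(si*(si*(si*one)))))*(e*ei)). rewrite h1. ring.
  transitivity (ei*(si*si*si*si*si)*((a * (s * (s * (s * (s * one)))) + (b * (s * (s * (s * one))) + (c * (s * (s * one)) + (d * s + e)))) - (a*s*s*s*s+b*s*s*s+c*s*s+d*s))). ring.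
  rewrite <- hQ.
  transitivity (ei*((s*si)*(s*si)*(s*si)*(s*si)*(s*si)) - a*ei*si*((s*si)*(s*si)*(s*si)*(s*si)) - b*ei*si*si*((s*si)*(s*si)*(s*si)) - c*ei*si*si*si*((s*si)*(s*si)) - d*ei*si*si*si*si*(s*si)). ring.
  rewrite h2. ring.
Qed.
End S1.

Module S2.
Local Notation s := (cs ts2 ts2i).
Local Notation si := (csi ts2 ts2i).
Local Notation one := (c1 ts2 ts2i).
Local Notation a := (cg ts2 ts2i ta cg_a).
Local Notation b := (cg ts2 ts2i tb cg_b).
Local Notation c := (cg ts2 ts2i tc cg_c).
Local Notation d := (cg ts2 ts2i td cg_d).
Local Notation e := (cg ts2 ts2i te cg_e).
Local Notation ei := (cg ts2 ts2i tei cg_ei).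
Local Infix "==" := (ceq ts2 ts2i) (at level 70).
Local Infix "+" := (cadd ts2 ts2i).
Local Infix "*" := (cmul ts2 ts2i).
Local Infix "-" := (csub ts2 ts2i).
Local Notation "- x" := (copp ts2 ts2i x).
Local Notation cp := (cpow ts2 ts2i).
Definition h1 : e * ei == one := heq_einv_r.
Definition h2 : s * si == one := heq_s2inv_r.
Definition hQ : cp s 5 == a * cp s 4 + (b * cp s 3 + (c * cp s 2 + (d * s + e))) := heq_quint2.

Lemma t_cube : cp s 3 == a * cp s 2 + (b * (s * one) + (c * one + (d * (si * one) + e * (si * (si * one))))).
Proof.
  pose proof hQ as hQ. pose proof h2 as h2. cbn [cpow] in *.
  transitivity ((s*si)*((s*si)*(s*(s*(s*one))))). rewrite h2. ring.
  transitivity (si*si*(s*(s*(s*(s*(s*one)))))). ring.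
  rewrite hQ.
  transitivity (a*s*s*((s*si)*(s*si)) + b*s*((s*si)*(s*si)) + c*((s*si)*(s*si)) + d*si*(s*si) + e*si*si). ring.
  rewrite h2. ring.
Qed.

Lemma t_inv : si == ei * cp s 4 + ((-(ei*a)) * cp s 3 + ((-(ei*b)) * cp s 2 + ((-(ei*c)) * s + (-(ei*d))))).
Proof.
  pose proof hQ as hQ. pose proof h2 as h2. pose proof h1 as h1. cbn [cpow] in *.
  transitivity (si*(e*ei)). rewrite h1. ring.
  transitivity (ei*si*((a * (s * (s * (s * (s * one)))) + (b * (s * (s * (s * one))) + (c * (s * (s * one)) + (d * s + e)))) - (a*s*s*s*s+b*s*s*s+c*s*s+d*s))). ring.
  rewrite <- hQ.
  transitivity (ei*(s*si)*(s*s*s*s - a*s*s*s - b*s*s - c*s - d)). ring.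
  rewrite h2. ring.
Qed.

Lemma t_qinv : cp si 5 == (-(ei*d)) * cp si 4 + ((-(ei*c)) * cp si 3 + ((-(ei*b)) * cp si 2 + ((-(ei*a)) * si + ei))).
Proof.
  pose proof hQ as hQ. pose proof h2 as h2. pose proof h1 as h1. cbn [cpow] in *.
  transitivity ((si*(si*(si*(si*(si*one)))))*(e*ei)). rewrite h1. ring.
  transitivity (ei*(si*si*si*si*si)*((a * (s * (s * (s * (s * one)))) + (b * (s * (s * (s * one))) + (c * (s * (s * one)) + (d * s + e)))) - (a*s*s*s*s+b*s*s*s+c*s*s+d*s))). ring.
  rewrite <- hQ.
  transitivity (ei*((s*si)*(s*si)*(s*si)*(s*si)*(s*si)) - a*ei*si*((s*si)*(s*si)*(s*si)*(s*si)) - b*ei*si*si*((s*si)*(s*si)*(s*si)) - c*ei*si*si*si*((s*si)*(s*si)) - d*ei*si*si*si*si*(s*si)). ring.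
  rewrite h2. ring.
Qed.
End S2.

Lemma cube1 : heq (tpow ts1 3) (tadd (tmul ta (tpow ts1 2)) (tadd (tmul tb (tmul ts1 tone)) (tadd (tmul tc tone) (tadd (tmul td (tmul ts1i tone)) (tmul te (tmul ts1i (tmul ts1i tone))))))).
Proof. exact S1.t_cube. Qed.
Definition inv_rhs (s : term) := tadd (tmul tei (tpow s 4)) (tadd (tmul (topp (tmul tei ta)) (tpow s 3)) (tadd (tmul (topp (tmul tei tb)) (tpow s 2)) (tadd (tmul (topp (tmul tei tc)) s) (topp (tmul tei td))))).
Lemma inv1 : heq ts1i (inv_rhs ts1).
Proof. exact S1.t_inv. Qed.
Lemma inv2 : heq ts2i (inv_rhs ts2).
Proof. exact S2.t_inv. Qed.
Lemma qinv1 : heq (Phi (tpow ts1 5)) (Phi (quintic_rhs ts1)).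
Proof. exact S1.t_qinv. Qed.
Lemma qinv2 : heq (Phi (tpow ts2 5)) (Phi (quintic_rhs ts2)).
Proof. exact S2.t_qinv. Qed.


Infix "**" := tmul (at level 41, right associativity).

Ltac ra := repeat rewrite <- heq_mulA.

Lemma c11 t : heq (ts1 ** ts1i ** t) t.
Proof. rewrite heq_mulA, heq_s1inv_r, heq_mul1l; reflexivity. Qed.
Lemma c12 t : heq (ts1i ** ts1 ** t) t.
Proof. rewrite heq_mulA, heq_s1inv_l, heq_mul1l; reflexivity. Qed.
Lemma c21 t : heq (ts2 ** ts2i ** t) t.
Proof. rewrite heq_mulA, heq_s2inv_r, heq_mul1l; reflexivity. Qed.
Lemma c22 t : heq (ts2i ** ts2 ** t) t.
Proof. rewrite heq_mulA, heq_s2inv_l, heq_mul1l; reflexivity. Qed.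
Lemma br t : heq (ts1 ** ts2 ** ts1 ** t) (ts2 ** ts1 ** ts2 ** t).
Proof.
  transitivity ((ts1 ** ts2 ** ts1) ** t). ra; reflexivity.
  rewrite heq_braid. ra; reflexivity.
Qed.
Lemma K1 t : heq (ts2 ** ts1 ** ts2i ** t) (ts1i ** ts2 ** ts1 ** t).
Proof.
  transitivity (ts1i ** ts1 ** ts2 ** ts1 ** ts2i ** t). rewrite c12; reflexivity.
  rewrite br, c21; reflexivity.
Qed.
Lemma K2 t : heq (ts2i ** ts1 ** ts2 ** t) (ts1 ** ts2 ** ts1i ** t).
Proof.
  transitivity (ts2i ** ts1 ** ts2 ** ts1 ** ts1i ** t). rewrite c11; reflexivity.
  rewrite br, c22; reflexivity.
Qed.
Lemma K3 t : heq (ts2 ** ts1i ** ts2i ** t) (ts1i ** ts2i ** ts1 ** t).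
Proof.
  transitivity (ts1i ** ts1 ** ts2 ** ts1i ** ts2i ** t). rewrite c12; reflexivity.
  rewrite <- K2, c21; reflexivity.
Qed.
Lemma K4 t : heq (ts2i ** ts1i ** ts2 ** t) (ts1 ** ts2i ** ts1i ** t).
Proof.
  transitivity (ts2i ** ts1i ** ts2 ** ts1 ** ts1i ** t). rewrite c11; reflexivity.
  rewrite <- K1, c22; reflexivity.
Qed.
Lemma BI t : heq (ts1i ** ts2i ** ts1i ** t) (ts2i ** ts1i ** ts2i ** t).
Proof.
  symmetry. transitivity (ts1i ** ts1 ** ts2i ** ts1i ** ts2i ** t). rewrite c12; reflexivity.
  rewrite <- K4, c21; reflexivity.
Qed.
Lemma P1c t : heq (ts2 ** ts1 ** ts1 ** ts1 ** ts2i ** t) (ts1i ** ts2 ** ts2 ** ts2 ** ts1 ** t).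
Proof.
  transitivity (ts2 ** ts1 ** ts2i ** ts2 ** ts1 ** ts2i ** ts2 ** ts1 ** ts2i ** t). rewrite !c22; reflexivity.
  rewrite !K1, !c11; reflexivity.
Qed.
Lemma P2c t : heq (ts2i ** ts1 ** ts1 ** ts1 ** ts2 ** t) (ts1 ** ts2 ** ts2 ** ts2 ** ts1i ** t).
Proof.
  transitivity (ts2i ** ts1 ** ts2 ** ts2i ** ts1 ** ts2 ** ts2i ** ts1 ** ts2 ** t). rewrite !c21; reflexivity.
  rewrite !K2, !c12; reflexivity.
Qed.
Lemma Sq1 t : heq (ts2 ** ts1 ** ts1 ** ts2i ** t) (ts1i ** ts2 ** ts2 ** ts1 ** t).
Proof.
  transitivity (ts2 ** ts1 ** ts2i ** ts2 ** ts1 ** ts2i ** t). rewrite !c22; reflexivity.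
  rewrite !K1, !c11; reflexivity.
Qed.
Lemma Sq2 t : heq (ts2i ** ts1 ** ts1 ** ts2 ** t) (ts1 ** ts2 ** ts2 ** ts1i ** t).
Proof.
  transitivity (ts2i ** ts1 ** ts2 ** ts2i ** ts1 ** ts2 ** t). rewrite !c21; reflexivity.
  rewrite !K2, !c12; reflexivity.
Qed.
Lemma Sq3 t : heq (ts2 ** ts1i ** ts1i ** ts2i ** t) (ts1i ** ts2i ** ts2i ** ts1 ** t).
Proof.
  transitivity (ts2 ** ts1i ** ts2i ** ts2 ** ts1i ** ts2i ** t). rewrite !c22; reflexivity.
  rewrite !K3, !c11; reflexivity.
Qed.
Lemma Sq4 t : heq (ts2i ** ts1i ** ts1i ** ts2 ** t) (ts1 ** ts2i ** ts2i ** ts1i ** t).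
Proof.
  transitivity (ts2i ** ts1i ** ts2 ** ts2i ** ts1i ** ts2 ** t). rewrite !c21; reflexivity.
  rewrite !K4, !c12; reflexivity.
Qed.


Lemma ct x y : heq (x ** tone) (y ** tone) -> heq x y.
Proof. intro H. rewrite <- (heq_mul1r x), <- (heq_mul1r y). exact H. Qed.
Ltac nrm := apply ct; ra; repeat rewrite heq_mul1l.

Lemma Phi_scalar r : scalar r -> scalar (Phi r).
Proof.
  induction 1; simpl; try (constructor; auto; fail).
  match goal with h : coefgen _ |- _ => destruct h end; simpl;
  repeat (apply sc_opp || apply sc_mul || (apply sc_gen; constructor)).
Qed.

Lemma Phi_heq x y : heq x y -> heq (Phi x) (Phi y).
Proof.
  induction 1; simpl; try (constructor; auto; fail).
  all: first
  [ solve [apply scalar_central; apply Phi_scalar; constructor; auto]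
  | apply heq_einv_l | apply heq_einv_r | apply heq_s1inv_l | apply heq_s1inv_r
  | apply heq_s2inv_l | apply heq_s2inv_r
  | solve [nrm; apply BI] | apply qinv1 | apply qinv2 | solve [etransitivity; eauto] ].
Qed.

Lemma tpow_sub g n : subalg g (tpow g n).
Proof. induction n; simpl. apply sa_scalar, sc_one. apply sa_mul; [apply sa_gen | auto]. Qed.

Lemma inv_sub g : subalg g (inv_rhs g).
Proof.
  unfold inv_rhs.
  repeat first [apply sa_add | apply sa_mul | apply tpow_sub | apply sa_gen | (apply sa_scalar; repeat (apply sc_opp || apply sc_mul || (apply sc_gen; constructor) || apply sc_one))].
Qed.

Lemma Phi_u1 x : u1 x -> u1 (Phi x).
Proof.
  unfold u1; induction 1; simpl.
  - constructor; apply Phi_scalar; auto.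
  - eapply sa_heq. symmetry; apply inv1. apply inv_sub.
  - apply sa_add; auto.
  - apply sa_mul; auto.
  - eapply sa_heq. apply Phi_heq; eauto. auto.
Qed.
Lemma Phi_u2 x : u2 x -> u2 (Phi x).
Proof.
  unfold u2; induction 1; simpl.
  - constructor; apply Phi_scalar; auto.
  - eapply sa_heq. symmetry; apply inv2. apply inv_sub.
  - apply sa_add; auto.
  - apply sa_mul; auto.
  - eapply sa_heq. apply Phi_heq; eauto. auto.
Qed.
Lemma s1i_u1 : u1 ts1i.
Proof. eapply sa_heq. symmetry; apply inv1. apply inv_sub. Qed.
Lemma s2i_u2 : u2 ts2i.
Proof. eapply sa_heq. symmetry; apply inv2. apply inv_sub. Qed.

Lemma span_Phi (G G' : term -> Prop) : (forall g, G g -> span G' (Phi g)) ->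
  forall x, span G x -> span G' (Phi x).
Proof.
  intros HG x H; induction H; simpl.
  - auto.
  - apply span_zero.
  - apply span_add; auto.
  - apply span_scal; auto. apply Phi_scalar; auto.
  - eapply span_heq. apply Phi_heq; eauto. auto.
Qed.

Definition gens (L : list (term -> Prop)) : term -> Prop := fun t => exists X, In X L /\ X t.

Ltac f2 := repeat (apply Forall2_cons; [first [apply Phi_u1; assumption | apply Phi_u2; assumption | reflexivity] |]); apply Forall2_nil.
Ltac inl := simpl; repeat (first [left; reflexivity | right]).

Lemma comp_u1w (v v' : list term) L : Phi (w v) = w v' -> In (u1wu1 v') L ->
  forall t, u1wu1 v t -> span (gens L) (Phi t).
Proof.
  intros E HI. apply span_Phi. intros g [xs [HF ->]].
  inversion HF as [|? x1 ? ? H1 HF1]; subst. inversion HF1 as [|? x2 ? ? H2 HF2]; subst.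
  inversion HF2 as [|? x3 ? ? H3 HF3]; subst. inversion HF3; subst.
  apply span_gen. exists (u1wu1 v'). split; auto.
  apply span_gen. exists [Phi x1; w v'; Phi x3]. split.
  - f2.
  - unfold elt in H2; subst. simpl. rewrite E. reflexivity.
Qed.

Lemma comp_u1e (x x' : term) L : Phi x = x' -> In (prodN [u1; elt x']) L ->
  forall t, prodN [u1; elt x] t -> span (gens L) (Phi t).
Proof.
  intros E HI. subst x'. apply span_Phi. intros g [xs [HF ->]].
  inversion HF as [|? x1 ? ? H1 HF1]; subst. inversion HF1 as [|? x2 ? ? H2 HF2]; subst.
  inversion HF2; subst. unfold elt in H2; subst.
  apply span_gen. exists (prodN [u1; elt (Phi x)]). split; auto.
  apply span_gen. exists [Phi x1; Phi x]. split.
  - f2.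
  - reflexivity.
Qed.

Lemma comp_u121 L : In (prodN [u1; u2; u1]) L ->
  forall t, prodN [u1; u2; u1] t -> span (gens L) (Phi t).
Proof.
  intros HI. apply span_Phi. intros g [xs [HF ->]].
  inversion HF as [|? x1 ? ? H1 HF1]; subst. inversion HF1 as [|? x2 ? ? H2 HF2]; subst.
  inversion HF2 as [|? x3 ? ? H3 HF3]; subst. inversion HF3; subst.
  apply span_gen. exists (prodN [u1; u2; u1]). split; auto.
  apply span_gen. exists [Phi x1; Phi x2; Phi x3]. split.
  - f2.
  - reflexivity.
Qed.

Lemma comp_sub (X : term -> Prop) L : In X L -> (forall t, X t -> X (Phi t)) ->
  forall t, X t -> span (gens L) (Phi t).
Proof. intros HI HX t Ht. apply span_gen. exists X; auto. Qed.


Definition M t := forall x1 x2, u1 x1 -> u1 x2 -> U' (x1 ** t ** x2).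

Lemma scal_pull r x y : scalar r -> heq (x ** r ** y) (r ** x ** y).
Proof. intro Hr. rewrite (heq_mulA x r), <- (scalar_central r x) by auto. ra. reflexivity. Qed.
Lemma M_heq t t' : heq t t' -> M t -> M t'.
Proof. intros E H x1 x2 h1 h2. eapply span_heq; [| apply (H x1 x2 h1 h2)]. rewrite E; reflexivity. Qed.
Lemma M_add t t' : M t -> M t' -> M (tadd t t').
Proof.
  intros H H' x1 x2 h1 h2. eapply span_heq; [| apply span_add; [apply (H x1 x2 h1 h2)|apply (H' x1 x2 h1 h2)]].
  rewrite heq_mulDl, heq_mulDr; reflexivity.
Qed.
Lemma M_scal r t : scalar r -> M t -> M (r ** t).
Proof.
  intros Hr H x1 x2 h1 h2. eapply span_heq; [| apply span_scal; [exact Hr | apply (H x1 x2 h1 h2)]].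
  ra. rewrite (scal_pull r x1) by auto. reflexivity.
Qed.
Lemma M_lmul a t : u1 a -> M t -> M (a ** t).
Proof.
  intros Ha H x1 x2 h1 h2. eapply span_heq; [| apply (H (x1 ** a) x2); auto; apply sa_mul; auto].
  ra; reflexivity.
Qed.
Lemma M_rmul a t : u1 a -> M t -> M (t ** a).
Proof.
  intros Ha H x1 x2 h1 h2. eapply span_heq; [| apply (H x1 (a ** x2)); auto; apply sa_mul; auto].
  ra; reflexivity.
Qed.
Lemma M_word v : In (u1wu1 v) U'_list -> M (w v).
Proof.
  intros HI x1 x2 h1 h2. apply span_gen. exists (u1wu1 v); split; auto.
  apply span_gen. exists [x1; w v; x2]. split; [|reflexivity].
  repeat (apply Forall2_cons; [first [assumption | reflexivity] |]); apply Forall2_nil.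
Qed.
Lemma M_u2 y : u2 y -> M y.
Proof.
  intros Hy x1 x2 h1 h2. apply span_gen. exists (prodN [u1; u2; u1]); split; [inl|].
  apply span_gen. exists [x1; y; x2]. split; [|reflexivity].
  repeat (apply Forall2_cons; [first [assumption | reflexivity] |]); apply Forall2_nil.
Qed.

Definition PL L Y p := M (L ** (p ** Y)).
Lemma PL_heq L Y p q : heq p q -> PL L Y p -> PL L Y q.
Proof. unfold PL; intros E; apply M_heq; rewrite E; reflexivity. Qed.
Lemma PL_add L Y p q : PL L Y p -> PL L Y q -> PL L Y (tadd p q).
Proof. unfold PL; intros H H'. eapply M_heq; [| apply M_add; [exact H | exact H']].
  rewrite heq_mulDl, heq_mulDr; reflexivity. Qed.
Lemma PL_scal L Y r p : scalar r -> PL L Y p -> PL L Y (r ** p).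
Proof. unfold PL; intros Hr H. eapply M_heq; [| apply (M_scal r); [exact Hr | exact H]].
  ra. rewrite (scal_pull r L) by auto. reflexivity. Qed.

Ltac sc := repeat (apply sc_opp || apply sc_mul || (apply sc_gen; constructor) || apply sc_one).

Lemma PL_cube L Y : PL L Y (tpow ts1 2) -> PL L Y (ts1 ** tone) -> PL L Y tone ->
  PL L Y (ts1i ** tone) -> PL L Y (ts1i ** ts1i ** tone) -> PL L Y (tpow ts1 3).
Proof.
  intros. eapply PL_heq. symmetry; apply cube1.
  repeat apply PL_add; apply PL_scal; auto; sc.
Qed.

Definition W1 := ts2 ** ts2 ** ts1i ** ts2.
Definition W2 := ts2 ** ts1i ** ts2 ** ts2.
Notation Y1 := (ts2i ** ts2i).

Lemma MW1 : M W1.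
Proof.
  apply M_heq with (ts1 ** ((ts2 ** (tpow ts1 3 ** Y1)) ** ts1i)).
  { unfold W1; simpl. nrm. rewrite P1c, c11, <- K4, c21. reflexivity. }
  apply M_lmul; [apply sa_gen|]. apply M_rmul; [apply s1i_u1|].
  apply PL_cube; unfold PL.
  - apply M_heq with (ts1i ** (w [ts2;ts1i;ts2] ** ts1)).
    { simpl; nrm. rewrite Sq1, <- K1. reflexivity. }
    apply M_lmul; [apply s1i_u1|]. apply M_rmul; [apply sa_gen|]. apply M_word; inl.
  - apply M_heq with (ts1i ** ts1i ** (ts2 ** ts1)).
    { nrm. rewrite !K1. reflexivity. }
    apply M_lmul; [apply s1i_u1|]. apply M_lmul; [apply s1i_u1|].
    apply M_rmul; [apply sa_gen|]. apply M_u2, sa_gen.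
  - apply M_heq with ts2i.
    { nrm. rewrite c21. reflexivity. }
    apply M_u2, s2i_u2.
  - apply M_heq with (ts1i ** w [ts2i; ts1; ts2i]).
    { simpl; nrm. rewrite K3. reflexivity. }
    apply M_lmul; [apply s1i_u1|]. apply M_word; inl.
  - apply M_heq with (ts1i ** w [ts2i; ts2i; ts1; ts2i]).
    { simpl; nrm. rewrite Sq3. reflexivity. }
    apply M_lmul; [apply s1i_u1|]. apply M_word; inl.
Qed.

Lemma MW2 : M W2.
Proof.
  apply M_heq with (ts1i ** ((Y1 ** (tpow ts1 3 ** ts2)) ** ts1)).
  { unfold W2; simpl. nrm. rewrite P2c, c12, <- K3, c22. reflexivity. }
  apply M_lmul; [apply s1i_u1|]. apply M_rmul; [apply sa_gen|].
  apply PL_cube; unfold PL.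
  - apply M_heq with (ts1 ** (w [ts2;ts1i;ts2] ** ts1i)).
    { simpl; nrm. rewrite Sq2, K2. reflexivity. }
    apply M_lmul; [apply sa_gen|]. apply M_rmul; [apply s1i_u1|]. apply M_word; inl.
  - apply M_heq with (ts1 ** ((ts2 ** ts1i) ** ts1i)).
    { nrm. rewrite !K2. reflexivity. }
    apply M_lmul; [apply sa_gen|]. apply M_rmul; [apply s1i_u1|].
    apply M_rmul; [apply s1i_u1|]. apply M_u2, sa_gen.
  - apply M_heq with ts2i.
    { nrm. rewrite c22. reflexivity. }
    apply M_u2, s2i_u2.
  - apply M_heq with (w [ts2i; ts1; ts2i] ** ts1i).
    { simpl; nrm. rewrite K4. reflexivity. }
    apply M_rmul; [apply s1i_u1|]. apply M_word; inl.
  - apply M_heq with (w [ts2i; ts1; ts2i; ts2i] ** ts1i).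
    { simpl; nrm. rewrite Sq4. reflexivity. }
    apply M_rmul; [apply s1i_u1|]. apply M_word; inl.
Qed.


Lemma comp_u1w' (x x' : term) L : Phi x = x' -> In (prodN [u1; elt x'; u1]) L ->
  forall t, prodN [u1; elt x; u1] t -> span (gens L) (Phi t).
Proof.
  intros E HI. subst x'. apply span_Phi. intros g [xs [HF ->]].
  inversion HF as [|? x1 ? ? H1 HF1]; subst. inversion HF1 as [|? x2 ? ? H2 HF2]; subst.
  inversion HF2 as [|? x3 ? ? H3 HF3]; subst. inversion HF3; subst. unfold elt in H2; subst.
  apply span_gen. exists (prodN [u1; elt (Phi x); u1]). split; auto.
  apply span_gen. exists [Phi x1; Phi x; Phi x3]. split.
  - f2.
  - reflexivity.
Qed.

Lemma comp_odd v W : Phi (w v) = W -> M W -> forall t, u1wu1 v t -> U' (Phi t).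
Proof.
  intros E HM. subst W. apply span_Phi. intros g [xs [HF ->]].
  inversion HF as [|? x1 ? ? H1 HF1]; subst. inversion HF1 as [|? x2 ? ? H2 HF2]; subst.
  inversion HF2 as [|? x3 ? ? H3 HF3]; subst. inversion HF3; subst. unfold elt in H2; subst.
  apply HM; apply Phi_u1; auto.
Qed.

Ltac comp_tac :=
  first
  [ solve [eapply comp_u121; [solve [inl] | eassumption]]
  | solve [eapply comp_u1e; [reflexivity | | eassumption]; solve [inl]]
  | solve [eapply comp_u1w'; [reflexivity | | eassumption]; solve [inl]]
  | solve [eapply comp_odd; [ | apply MW1 | eassumption]; reflexivity]
  | solve [eapply comp_odd; [ | apply MW2 | eassumption]; reflexivity] ].

Ltac split_in H := simpl in H;
  repeat match goal with
  | H : _ \/ _ |- _ => destruct H as [<-|H]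
  | H : False |- _ => destruct H
  end.

Lemma stab_U' : Phi_stable U'.
Proof.
  intros x H. unfold U', sumN in *. revert x H. apply span_Phi.
  intros g [X [HI HX]]. split_in HI; comp_tac.
Qed.

Lemma stab_U'' : Phi_stable U''.
Proof.
  intros x H. unfold U'', sumN in *. revert x H. apply span_Phi.
  intros g [X [HI HX]]. split_in HI;
  first [ solve [eapply comp_sub; [ | apply stab_U' | eassumption]; solve [inl]] | comp_tac ].
Qed.
Lemma stab_U''' : Phi_stable U'''.
Proof.
  intros x H. unfold U''', sumN in *. revert x H. apply span_Phi.
  intros g [X [HI HX]]. split_in HI;
  first [ solve [eapply comp_sub; [ | apply stab_U'' | eassumption]; solve [inl]] | comp_tac ].
Qed.
Lemma stab_U'''' : Phi_stable U''''.
Proof.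
  intros x H. unfold U'''', sumN in *. revert x H. apply span_Phi.
  intros g [X [HI HX]]. split_in HI;
  first [ solve [eapply comp_sub; [ | apply stab_U''' | eassumption]; solve [inl]] | comp_tac ].
Qed.
Lemma stab_U : Phi_stable U.
Proof.
  intros x H. unfold U, sumN in *. revert x H. apply span_Phi.
  intros g [X [HI HX]]. split_in HI;
  first [ solve [eapply comp_sub; [ | apply stab_U'''' | eassumption]; solve [inl]] | comp_tac ].
Qed.

Theorem lemma4p1 :
  Phi_stable U' /\ Phi_stable U'' /\ Phi_stable U''' /\ Phi_stable U'''' /\ Phi_stable U.
Proof.
  split; [exact stab_U'|]. split; [exact stab_U''|]. split; [exact stab_U'''|].
  split; [exact stab_U''''| exact stab_U].
Qed.
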